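(* A $\star$-metric space $(X,d^\star)$ is compact (i.e. $(X,\mathscr{T}_{d^\star})$ is a compact topological space) if and only if $(X,d^\star)$ is complete and totally bounded.
   Context: A $t$-definer is a function $\star:[0,\infty)\times[0,\infty)\to[0,\infty)$ such that for all $a,b,c\ge 0$: $a\star b=b\star a$; $a\star(b\star c)=(a\star b)\star c$; if $a\le b$ then $a\star c\le b\star c$; $a\star 0=a$; and $\star$ is continuous in its first variable with respect to the Euclidean topology. Given a nonempty set $X$ and a $t$-definer $\star$, a $\star$-metric on $X$ is a function $d^\star:X\times X\to[0,\infty)$ such that for all $x,y,z\in X$: $d^\star(x,y)=0$ iff $x=y$; $d^\star(x,y)=d^\star(y,x)$; and $d^\star(x,y)\le d^\star(x,z)\star d^\star(z,y)$. Put $B_{d^\star}(a,r)=\{x\in X: d^\star(a,x)<r\}$ and let $\mathscr{T}_{d^\star}$ be the topology consisting of all $U\subseteq X$ such that for each $a\in U$ some $B_{d^\star}(a,r)$, $r>0$, is contained in $U$. $(X,d^\star)$ is totally bounded if for every $\epsilon>0$ there is a finite $F\subseteq X$ with $X=\bigcup_{x\in F}B_{d^\star}(x,\epsilon)$. A sequence $\{x_n\}$ is Cauchy if for every $\epsilon>0$ there is $k$ with $d^\star(x_n,x_m)<\epsilon$ for all $m,n\ge k$; it converges to $x$ if for every $\epsilon>0$ there is $k$ with $d^\star(x,x_n)<\epsilon$ for $n\ge k$. $(X,d^\star)$ is complete if every Cauchy sequence converges to a point of $X$. *)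

(* Defs.v *)
From Stdlib Require Import Reals List.
Open Scope R_scope.

(* A t-definer: an operation on [0,oo); we model it as R -> R -> R and
   impose the axioms on nonnegative arguments, plus that [0,oo) is closed
   under it (the codomain is [0,oo)). *)
Definition is_tdefiner (star : R -> R -> R) : Prop :=
  (forall a b, 0 <= a -> 0 <= b -> 0 <= star a b) /\
  (forall a b, 0 <= a -> 0 <= b -> star a b = star b a) /\
  (forall a b c, 0 <= a -> 0 <= b -> 0 <= c ->
     star a (star b c) = star (star a b) c) /\
  (forall a b c, 0 <= a -> 0 <= b -> 0 <= c -> a <= b -> star a c <= star b c) /\
  (forall a, 0 <= a -> star a 0 = a) /\
  (forall b a, 0 <= b -> 0 <= a ->
     forall eps, 0 < eps -> exists delta, 0 < delta /\
       forall a', 0 <= a' -> Rabs (a' - a) < delta ->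
         Rabs (star a' b - star a b) < eps).

Definition is_star_metric {X : Type} (star : R -> R -> R) (d : X -> X -> R) : Prop :=
  (forall x y, 0 <= d x y) /\
  (forall x y, d x y = 0 <-> x = y) /\
  (forall x y, d x y = d y x) /\
  (forall x y z, d x y <= star (d x z) (d z y)).

Definition ball {X : Type} (d : X -> X -> R) (a : X) (r : R) : X -> Prop :=
  fun x => d a x < r.

Definition d_open {X : Type} (d : X -> X -> R) (U : X -> Prop) : Prop :=
  forall a, U a -> exists r, 0 < r /\ forall x, ball d a r x -> U x.

Definition d_compact {X : Type} (d : X -> X -> R) : Prop :=
  forall C : (X -> Prop) -> Prop,
    (forall U, C U -> d_open d U) ->
    (forall x, exists U, C U /\ U x) ->
    exists l : list (X -> Prop),
      (forall U, In U l -> C U) /\ (forall x, exists U, In U l /\ U x).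

Definition totally_bounded {X : Type} (d : X -> X -> R) : Prop :=
  forall eps, 0 < eps -> exists F : list X,
    forall x, exists y, In y F /\ ball d y eps x.

Definition d_cauchy {X : Type} (d : X -> X -> R) (u : nat -> X) : Prop :=
  forall eps, 0 < eps -> exists k, forall m n, (k <= n)%nat -> (k <= m)%nat ->
    d (u n) (u m) < eps.

Definition d_converges {X : Type} (d : X -> X -> R) (u : nat -> X) (x : X) : Prop :=
  forall eps, 0 < eps -> exists k, forall n, (k <= n)%nat -> d x (u n) < eps.

Definition d_complete {X : Type} (d : X -> X -> R) : Prop :=
  forall u, d_cauchy d u -> exists x, d_converges d u x.

(* Main.v *)
Require Import Defs.
From Stdlib Require Import Reals List Lra Lia Classical ClassicalEpsilon ZArith.
Open Scope R_scope.

Lemma star_mono2 (star : R -> R -> R) : is_tdefiner star ->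
  forall a b c d, 0 <= a -> 0 <= b -> 0 <= c -> 0 <= d -> a <= b -> c <= d ->
  star a c <= star b d.
Proof.
  intros [H0 [Hc [Ha [Hm [Hz Hk]]]]] a b c d Pa Pb Pc Pd Hab Hcd.
  apply Rle_trans with (star b c). apply Hm; auto.
  rewrite (Hc b c), (Hc b d) by auto. apply Hm; auto.
Qed.

Lemma star_small (star : R -> R -> R) : is_tdefiner star ->
  forall eps, 0 < eps -> exists delta, 0 < delta /\
    forall a b, 0 <= a -> 0 <= b -> a < delta -> b < delta -> star a b < eps.
Proof.
  intros HT eps Heps. pose proof HT as [H0 [Hc [Ha [Hm [Hz Hk]]]]].
  destruct (Hk (eps/2) 0 ltac:(lra) ltac:(lra) (eps/2) ltac:(lra)) as [d0 [Hd0 Hd]].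
  exists (Rmin d0 (eps/2)). split. apply Rmin_glb_lt; lra.
  intros a b Pa Pb Hadl Hbdl.
  assert (Ha1 : a < d0) by (eapply Rlt_le_trans; [exact Hadl| apply Rmin_l]).
  assert (Hb1 : b < eps/2) by (eapply Rlt_le_trans; [exact Hbdl| apply Rmin_r]).
  apply Rle_lt_trans with (star a (eps/2)).
  apply (star_mono2 star HT); lra.
  specialize (Hd a Pa). rewrite Rminus_0_r, Rabs_right in Hd by lra.
  specialize (Hd Ha1). rewrite (Hc 0 (eps/2)), Hz in Hd by lra.
  apply Rabs_def2 in Hd. lra.
Qed.

Lemma ball_open {X : Type} (star : R -> R -> R) (d : X -> X -> R) :
  is_tdefiner star -> is_star_metric star d ->
  forall a r, d_open d (ball d a r).
Proof.
  intros HT HM a r x Hx. pose proof HT as [H0 [Hc [Ha [Hm [Hz Hk]]]]].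
  destruct HM as [Hd0 [Hdeq [Hds Htri]]]. unfold ball in *.
  destruct (Hk (d a x) 0 (Hd0 a x) ltac:(lra) (r - d a x) ltac:(lra)) as [de [Hde Hde2]].
  exists de. split; auto. intros y Hy.
  apply Rle_lt_trans with (star (d a x) (d x y)). apply Htri.
  rewrite Hc by auto.
  specialize (Hde2 (d x y) (Hd0 x y)). rewrite Rminus_0_r, Rabs_right in Hde2 by (apply Rle_ge; auto).
  specialize (Hde2 Hy). rewrite (Hc 0), Hz in Hde2 by (auto; lra).
  apply Rabs_def2 in Hde2. lra.
Qed.

Definition fcov {X : Type} (C : (X -> Prop) -> Prop) (A : X -> Prop) : Prop :=
  exists l : list (X -> Prop), (forall U, In U l -> C U) /\
    (forall x, A x -> exists U, In U l /\ U x).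

Lemma fcov_union {X : Type} (C : (X -> Prop) -> Prop) (A : X -> Prop)
  (B : X -> X -> Prop) (F : list X) :
  (forall y, In y F -> fcov C (fun x => A x /\ B y x)) ->
  fcov C (fun x => A x /\ exists y, In y F /\ B y x).
Proof.
  induction F as [|y F IH]; intros H.
  - exists nil. split. intros U []. intros x [_ [y [[] _]]].
  - destruct (H y (or_introl eq_refl)) as [l1 [Hl1 Hl1']].
    destruct IH as [l2 [Hl2 Hl2']]. intros z Hz; apply H; now right.
    exists (l1 ++ l2). split.
    + intros U HU. apply in_app_or in HU. destruct HU; auto.
    + intros x [Ax [z [[<-|Hz] Bz]]].
      * destruct (Hl1' x (conj Ax Bz)) as [U [HU HUx]]. exists U; split; auto.
        apply in_or_app; auto.
      * destruct (Hl2' x (conj Ax (ex_intro _ z (conj Hz Bz)))) as [U [HU HUx]].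
        exists U; split; auto. apply in_or_app; auto.
Qed.

Lemma list_bound {X : Type} (u : nat -> X) (l : list (X -> Prop)) :
  (forall U, In U l -> exists K, forall m, (K <= m)%nat -> ~ U (u m)) ->
  exists K, forall U, In U l -> forall m, (K <= m)%nat -> ~ U (u m).
Proof.
  induction l as [|V l IH]; intros H.
  - exists 0%nat. intros U [].
  - destruct (H V (or_introl eq_refl)) as [K1 HK1].
    destruct IH as [K2 HK2]. intros U HU; apply H; now right.
    exists (K1 + K2)%nat. intros U [<-|HU] m Hm.
    + apply HK1; lia.
    + apply HK2; auto; lia.
Qed.

Lemma list_centers {X : Type} (d : X -> X -> R) (eps : R) (l : list (X -> Prop)) :
  (forall U, In U l -> exists y, U = ball d y eps) ->
  exists F : list X, forall x, (exists U, In U l /\ U x) -> exists y, In y F /\ ball d y eps x.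
Proof.
  induction l as [|V l IH]; intros H.
  - exists nil. intros x [U [[] _]].
  - destruct (H V (or_introl eq_refl)) as [y Hy].
    destruct IH as [F HF]. intros U HU; apply H; now right.
    exists (y :: F). intros x [U [[<-|HU] Ux]].
    + exists y. split. now left. now subst.
    + destruct (HF x (ex_intro _ U (conj HU Ux))) as [z [Hz1 Hz2]].
      exists z; split; auto. now right.
Qed.

Lemma compact_tb {X : Type} (star : R -> R -> R) (d : X -> X -> R) :
  is_tdefiner star -> is_star_metric star d -> d_compact d -> totally_bounded d.
Proof.
  intros HT HM Hc eps Heps.
  destruct (Hc (fun U => exists y, U = ball d y eps)) as [l [Hl Hl']].
  - intros U [y ->]. apply (ball_open star d HT HM).
  - intros x. exists (ball d x eps). split. eauto. unfold ball.
    destruct HM as [_ [Hq _]]. rewrite (proj2 (Hq x x) eq_refl). lra.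
  - destruct (list_centers d eps l Hl) as [F HF]. exists F. intros x. apply HF, Hl'.
Qed.

Lemma compact_complete {X : Type} (star : R -> R -> R) (d : X -> X -> R) :
  is_tdefiner star -> is_star_metric star d -> d_compact d -> d_complete d.
Proof.
  intros HT HM Hc u Hu. apply NNPP. intros Hno.
  pose proof HM as [Hd0 [Hdeq [Hds Htri]]].
  destruct (Hc (fun U => d_open d U /\ exists K, forall m, (K <= m)%nat -> ~ U (u m)))
    as [l [Hl Hl']].
  - intros U [H _]; auto.
  - intros x.
    assert (Hnc : ~ d_converges d u x) by (intro; apply Hno; eauto).
    unfold d_converges in Hnc.
    apply not_all_ex_not in Hnc. destruct Hnc as [e He].
    apply imply_to_and in He. destruct He as [He He2].
    destruct (star_small star HT e He) as [de [Hde Hde2]].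
    destruct (Hu de Hde) as [k Hk].
    exists (ball d x de). split; [split|].
    + apply (ball_open star d HT HM).
    + exists k. intros m Hm Hxm. apply He2. exists k. intros n Hn.
      apply Rle_lt_trans with (star (d x (u m)) (d (u m) (u n))). apply Htri.
      apply Hde2; auto; apply Hk; auto.
    + unfold ball. rewrite (proj2 (Hdeq x x) eq_refl). auto.
  - destruct (list_bound u l) as [K HK].
    + intros U HU. apply (Hl U HU).
    + destruct (Hl' (u K)) as [U [HU HUx]]. apply (HK U HU K); auto.
Qed.

Definition rad (k : nat) : R := / INR (S k).

Lemma rad_pos k : 0 < rad k.
Proof. unfold rad. apply Rinv_0_lt_compat, lt_0_INR; lia. Qed.

Lemma rad_small e : 0 < e -> exists k, forall n, (k <= n)%nat -> rad n < e.
Proof.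
  intros He. destruct (archimed (/ e)) as [H1 _].
  assert (Hp : (0 < up (/e))%Z).
  { apply lt_IZR. pose proof (Rinv_0_lt_compat e He). simpl; lra. }
  exists (Z.to_nat (up (/ e))). intros n Hn. unfold rad.
  assert (Hn' : / e < INR (S n)).
  { apply Rlt_le_trans with (IZR (up (/ e))); auto.
    rewrite <- (Znat.Z2Nat.id (up (/e))) by lia. rewrite <- INR_IZR_INZ.
    apply le_INR. lia. }
  pose proof (Rinv_0_lt_compat e He).
  rewrite <- (Rinv_inv e). apply Rinv_lt_contravar; auto.
  apply Rmult_lt_0_compat; lra.
Qed.


Definition ych {X : Type} (inh : inhabited X) (d : X -> X -> R) (C : (X -> Prop) -> Prop)
  (k : nat) (A : X -> Prop) : X :=
  epsilon inh (fun y => ~ fcov C (fun x => A x /\ ball d y (rad k) x)).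

Fixpoint Aseq {X : Type} (inh : inhabited X) (d : X -> X -> R) (C : (X -> Prop) -> Prop)
  (k : nat) : X -> Prop :=
  match k with
  | O => fun _ => True
  | S k => fun x => Aseq inh d C k x /\ ball d (ych inh d C k (Aseq inh d C k)) (rad k) x
  end.

Lemma Aseq_nf {X : Type} (inh : inhabited X) (d : X -> X -> R) (C : (X -> Prop) -> Prop) :
  ~ fcov C (fun _ => True) -> totally_bounded d -> forall k, ~ fcov C (Aseq inh d C k).
Proof.
  intros H0 Htb k. induction k as [|k IH]; simpl; auto.
  assert (Hex : exists y, ~ fcov C (fun x => Aseq inh d C k x /\ ball d y (rad k) x)).
  { apply NNPP. intros Hn. apply IH.
    destruct (Htb (rad k) (rad_pos k)) as [F HF].
    assert (Hu := fcov_union C (Aseq inh d C k) (fun y x => ball d y (rad k) x) F).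
    destruct Hu as [l [Hl Hl']].
    - intros y _. apply NNPP. intros Hy. apply Hn. eauto.
    - exists l. split; [auto|]. intros x Ax. apply Hl'. split; auto. }
  exact (epsilon_spec inh _ Hex).
Qed.

Lemma Aseq_mono {X : Type} (inh : inhabited X) (d : X -> X -> R) (C : (X -> Prop) -> Prop) :
  forall k m x, (k <= m)%nat -> Aseq inh d C m x -> Aseq inh d C k x.
Proof.
  intros k m x Hkm. induction Hkm; auto. simpl. intros [H _]; auto.
Qed.

Lemma complete_tb_compact {X : Type} (star : R -> R -> R) (d : X -> X -> R) :
  inhabited X -> is_tdefiner star -> is_star_metric star d ->
  d_complete d -> totally_bounded d -> d_compact d.
Proof.
  intros inh HT HM Hcomp Htb C Hopen Hcov.
  pose proof HM as [Hd0 [Hdeq [Hds Htri]]].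
  apply NNPP. intros Hno.
  assert (H0 : ~ fcov C (fun _ => True)).
  { intros [l [Hl Hl']]. apply Hno. exists l. split; auto. }
  pose (A := Aseq inh d C).
  pose (yk := fun k => ych inh d C k (A k)).
  assert (Hnf : forall k, ~ fcov C (A k)) by (apply Aseq_nf; auto).
  assert (Hne : forall k, exists x, A k x).
  { intros k. apply NNPP. intros Hn. apply (Hnf k). exists nil. split.
    intros U []. intros x Hx. exfalso. apply Hn. eauto. }
  pose (xs := fun k => epsilon inh (A (S k))).
  assert (Hxs : forall k, A (S k) (xs k)) by (intros k; exact (epsilon_spec inh _ (Hne (S k)))).
  assert (Hball : forall k z, A (S k) z -> d (yk k) z < rad k).
  { intros k z [_ Hz]. exact Hz. }
  assert (Hxb : forall k n, (k <= n)%nat -> d (yk k) (xs n) < rad k).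
  { intros k n Hkn. apply Hball. apply (Aseq_mono inh d C (S k) (S n)). lia. apply Hxs. }
  destruct (Hcomp xs) as [x Hx].
  { intros eps Heps. destruct (star_small star HT eps Heps) as [de [Hde Hde2]].
    destruct (rad_small de Hde) as [k Hk].
    exists k. intros m n Hm Hn.
    apply Rle_lt_trans with (star (d (xs n) (yk k)) (d (yk k) (xs m))). apply Htri.
    apply Hde2; auto. rewrite Hds. apply Rlt_trans with (rad k); auto.
    apply Rlt_trans with (rad k); auto. }
  destruct (Hcov x) as [U [HU HUx]].
  destruct (Hopen U HU x HUx) as [r [Hr Hr2]].
  destruct (star_small star HT r Hr) as [d1 [Hd1 Hd1']].
  destruct (star_small star HT d1 Hd1) as [d2 [Hd2 Hd2']].
  destruct (Hx d1 Hd1) as [k1 Hk1].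
  destruct (rad_small d2 Hd2) as [k2 Hk2].
  apply (Hnf (S (k1 + k2))). exists (U :: nil). split.
  - intros V [<-|[]]; auto.
  - intros z Hz. exists U. split. now left. apply Hr2. unfold ball.
    set (k := (k1 + k2)%nat) in *.
    apply Rle_lt_trans with (star (d x (xs k)) (d (xs k) z)). apply Htri.
    apply Hd1'; auto. apply Hk1. lia.
    apply Rle_lt_trans with (star (d (xs k) (yk k)) (d (yk k) z)). apply Htri.
    apply Hd2'; auto.
    rewrite Hds. apply Rlt_trans with (rad k); auto. apply Hk2. lia.
    apply Rlt_trans with (rad k); auto. apply Hk2. lia.
Qed.

Theorem theorem4p6 (X : Type) (star : R -> R -> R) (d : X -> X -> R) :
  inhabited X -> is_tdefiner star -> is_star_metric star d ->
  (d_compact d <-> d_complete d /\ totally_bounded d).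
Proof.
  intros inh HT HM. split.
  - intros Hc. split. eapply compact_complete; eauto. eapply compact_tb; eauto.
  - intros [H1 H2]. eapply complete_tb_compact; eauto.
Qed.
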